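(* Let $H$ be a Hilbert space and, for $i=1,2$, let $(K_i,[\cdot,\cdot]_i)$ be Pontryagin spaces, $A_i$ self-adjoint linear relations in $K_i$, $z_0\in\rho(A_1)\cap\rho(A_2)\cap\mathbb{C}^+$, $\Gamma_i:H\to K_i$ bounded, and $$Q_i(z)=Q_i(z_0)^*+(z-\bar z_0)\Gamma_i^+\big(I_i+(z-z_0)(A_i-z)^{-1}\big)\Gamma_i .$$ Let $\tilde K=K_1[+]K_2$ (orthogonal direct sum), let $A=A_1\oplus A_2=\{\{k_1[+]k_2,h_1[+]h_2\}:\{k_i,h_i\}\in A_i\}$, and let $\Gamma:H\to\tilde K$, $\Gamma h=\Gamma_1h[+]\Gamma_2h$, so that $\Gamma^+(k_1[+]k_2)=\Gamma_1^+k_1+\Gamma_2^+k_2$. Then $Q:=Q_1+Q_2$ satisfies $$Q(z)=Q_1(z_0)^*+Q_2(z_0)^*+(z-\bar z_0)\Gamma^+\big(I+(z-z_0)(A-z)^{-1}\big)\Gamma. \tag{14}$$ (i) If $\Gamma^+:\tilde K\to H$ is injective, then the representation (14) is minimal, i.e. $\tilde K=\overline{\operatorname{span}}\{(I+(z-z_0)(A-z)^{-1})\Gamma h: z\in\rho(A),h\in H\}$. (ii) Suppose instead that $A_i$ are bounded self-adjoint operators in $K_i$, $\Gamma_{0i}:H\to K_i$ are bounded, $Q_i(z)=\Gamma_{0i}^+(A_i-z)^{-1}\Gamma_{0i}$, and with $\Gamma_0h:=\Gamma_{01}h[+]\Gamma_{02}h$ and $A=A_1\oplus A_2$ the representation $Q(z):=Q_1(z)+Q_2(z)=\Gamma_0^+(A-z)^{-1}\Gamma_0$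 is minimal, i.e. $K_1[+]K_2=\overline{\operatorname{span}}\{(A-z)^{-1}\Gamma_0h:z\in\rho(A),h\in H\}$. If at least one of $\Gamma_{01},\Gamma_{02}$ is injective, then: whenever $f\in H$ satisfies $(f,Q(z)h)=0$ for all $z\in\rho(A)$ and all $h\in H$, it follows that $f=0$.
   Context: $H$ is a Hilbert space with inner product $(\cdot,\cdot)$. A Pontryagin space is a Krein space whose indefinite inner product $[\cdot,\cdot]$ has finitely many negative squares. For a bounded operator $\Gamma:H\to K$ into a Pontryagin space, $\Gamma^+:K\to H$ is defined by $(h,\Gamma^+k)=[\Gamma h,k]$. $K_1[+]K_2$ denotes the orthogonal direct sum with inner product $[k_1+k_2,k_1'+k_2']=[k_1,k_1']_1+[k_2,k_2']_2$. *)

(* Defs.v *)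
From HB Require Import structures.
From mathcomp Require Import all_boot all_order all_algebra.
From mathcomp Require Import reals complex.
From Stdlib Require Import ClassicalEpsilon.
Set Implicit Arguments. Unset Strict Implicit. Unset Printing Implicit Defensive.
Import Order.TTheory GRing.Theory Num.Theory.
Local Open Scope ring_scope.

Section Defs.
Variable R : realType.
Local Notation C := (R[i]).

(* linear relations in V, given by their graph *)
Definition relation (V : lmodType C) : Type := V -> V -> Prop.

Section OneSpace.
Variable V : lmodType C.

Definition nrm2 (ip : V -> V -> C) (x : V) : R := complex.Re (ip x x).

Definition inner_prod (ip : V -> V -> C) : Prop :=
  (forall (a : C) (x x' y : V), ip (a *: x + x') y = a * ip x y + ip x' y) /\
  (forall x y : V, ip y x = Num.conj (ip x y)) /\
  (forall x : V, 0 <= ip x x) /\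
  (forall x : V, ip x x = 0 -> x = 0).

Definition complete (ip : V -> V -> C) : Prop :=
  forall u : nat -> V,
    (forall e : R, 0 < e -> exists N, forall m n, (N <= m)%N -> (N <= n)%N ->
        nrm2 ip (u m - u n) < e) ->
    exists l : V, forall e : R, 0 < e -> exists N, forall n, (N <= n)%N ->
        nrm2 ip (u n - l) < e.

Definition hilbert (ip : V -> V -> C) : Prop := inner_prod ip /\ complete ip.

Definition linearF (W : lmodType C) (T : V -> W) : Prop :=
  forall (a : C) (x y : V), T (a *: x + y) = a *: T x + T y.

(* Pontryagin space: a Hilbert space (V, ip) with a fundamental symmetry J
   (linear, J^2 = I, ip-selfadjoint) whose negative eigenspace is finite
   dimensional; the indefinite inner product is [x,y] = ip (J x) y. *)
Definition pontryagin (ip : V -> V -> C) (J : V -> V) : Prop :=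
  hilbert ip /\ linearF J /\ (forall x, J (J x) = x) /\
  (forall x y, ip (J x) y = ip x (J y)) /\
  exists n (e : 'I_n -> V), forall x, J x = - x ->
    exists c : 'I_n -> C, x = \sum_(i < n) c i *: e i.

Definition kform (ip : V -> V -> C) (J : V -> V) (x y : V) : C := ip (J x) y.


Definition lin_rel (A : relation V) : Prop :=
  A 0 0 /\ forall (a : C) f g f' g', A f g -> A f' g' -> A (a *: f + f') (a *: g + g').

Definition adj_rel (kf : V -> V -> C) (A : relation V) : relation V :=
  fun k h => forall f g, A f g -> kf h f = kf k g.

Definition selfadj_rel (kf : V -> V -> C) (A : relation V) : Prop :=
  lin_rel A /\ forall k h, A k h <-> adj_rel kf A k h.

(* (A - z)^{-1} = {{g - z f, f} : {f, g} in A} *)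
Definition inv_shift (A : relation V) (z : C) : relation V :=
  fun k f => exists g, A f g /\ k = g - z *: f.

Definition graph (T : V -> V) : relation V := fun f g => g = T f.

End OneSpace.

Section Bounded.
Variables (V W : lmodType C).
Definition bounded (ipV : V -> V -> C) (ipW : W -> W -> C) (T : V -> W) : Prop :=
  linearF T /\ exists M : R, forall x, nrm2 ipW (T x) <= M * nrm2 ipV x.
End Bounded.

Section OneSpace2.
Variable V : lmodType C.


Definition rho (ip : V -> V -> C) (A : relation V) (z : C) : Prop :=
  exists T : V -> V, bounded ip ip T /\ forall k f, inv_shift A z k f <-> f = T k.

(* the resolvent (A - z)^{-1} as a function (meaningful for z in rho(A)) *)
Definition res (A : relation V) (z : C) (k : V) : V :=
  epsilon (inhabits (0 : V)) (fun f => inv_shift A z k f).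

Definition fspan (S : V -> Prop) : V -> Prop :=
  fun k => exists n (c : 'I_n -> C) (s : 'I_n -> V),
    (forall i, S (s i)) /\ k = \sum_(i < n) c i *: s i.

Definition nclosure (ip : V -> V -> C) (P : V -> Prop) : V -> Prop :=
  fun k => forall e : R, 0 < e -> exists x, P x /\ nrm2 ip (k - x) < e.

End OneSpace2.

Section Adjoints.
Variables (V W : lmodType C).
Definition is_kadj (ipV : V -> V -> C) (kfW : W -> W -> C) (G : V -> W) (Gp : W -> V) :=
  forall h k, ipV h (Gp k) = kfW (G h) k.
End Adjoints.

Definition is_hadj (V : lmodType C) (ip : V -> V -> C) (T Ts : V -> V) :=
  forall x y, ip (T x) y = ip x (Ts y).

Section Sums.
Variables (V1 V2 : lmodType C).
Definition ipsum (ip1 : V1 -> V1 -> C) (ip2 : V2 -> V2 -> C) (x y : V1 * V2) : C :=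
  ip1 x.1 y.1 + ip2 x.2 y.2.
Definition Jsum (J1 : V1 -> V1) (J2 : V2 -> V2) (x : V1 * V2) : V1 * V2 :=
  (J1 x.1, J2 x.2).
Definition rsum (A1 : relation V1) (A2 : relation V2) : relation (V1 * V2)%type :=
  fun k h => A1 k.1 h.1 /\ A2 k.2 h.2.
End Sums.

End Defs.

(* Main.v *)
Require Import Defs.
From HB Require Import structures.
From mathcomp Require Import all_boot all_order all_algebra.
From mathcomp Require Import reals complex.
From mathcomp Require Import ring lra.
From Stdlib Require Import ClassicalEpsilon.
Import Order.TTheory GRing.Theory Num.Theory.
Local Open Scope ring_scope.
Set Implicit Arguments.
Section IP.
Variable R : realType.
Local Notation C := (R[i]).
Local Notation Re := (@complex.Re R).
Local Notation Im := (@complex.Im R).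
Definition rc (r : R) : C := Complex r 0.

Lemma ReD (a b : C) : Re (a + b) = Re a + Re b.
Proof. by case: a; case: b. Qed.
Lemma ReN (a : C) : Re (- a) = - Re a.
Proof. by case: a. Qed.
Lemma ReB (a b : C) : Re (a - b) = Re a - Re b.
Proof. by rewrite ReD ReN. Qed.
Lemma ReJ (a : C) : Re (Num.conj a) = Re a.
Proof. by case: a. Qed.
Lemma Re_rcM (r : R) (c : C) : Re (rc r * c) = r * Re c.
Proof. case: c => a b /=. by rewrite mul0r subr0. Qed.
Lemma conj_rc (r : R) : Num.conj (rc r) = rc r.
Proof. by rewrite /rc; change (Complex r (-0) = Complex r 0); rewrite oppr0. Qed.
Lemma rcM (r s : R) : rc r * rc s = rc (r * s).
Proof. rewrite /rc /=. congr Complex; rewrite ?mul0r ?mulr0 ?subr0 ?addr0 //. Qed.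
Lemma rc1 : rc 1 = 1. Proof. by []. Qed.
Lemma rc0 : rc 0 = 0. Proof. by []. Qed.
Lemma Re_iM (c : C) : Re (Num.conj 'i%C * c) = Im c.
Proof. case: c => a b /=. by rewrite mul0r mulN1r sub0r opprK. Qed.
Lemma ReIm0 (c : C) : Re c = 0 -> Im c = 0 -> c = 0.
Proof. by case: c => a b /= -> ->. Qed.
Lemma ge0_Re (c : C) : 0 <= c -> 0 <= Re c.
Proof. by rewrite lecE => /andP[]. Qed.
Lemma ge0_rc (c : C) : 0 <= c -> c = rc (Re c).
Proof. move=> h; have := ger0_Im h. by case: c {h} => a b /= ->. Qed.

Variable V : lmodType C.
Variable ip : V -> V -> C.
Hypothesis Hip : inner_prod ip.

Lemma ipDl x x' y : ip (x + x') y = ip x y + ip x' y.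
Proof. by have := (Hip.1 1 x x' y); rewrite scale1r mul1r. Qed.
Lemma ip0l y : ip 0 y = 0.
Proof. have := ipDl 0 0 y. rewrite addr0 => /eqP. by rewrite -subr_eq subrr eq_sym => /eqP. Qed.
Lemma ipZl a x y : ip (a *: x) y = a * ip x y.
Proof. by have := (Hip.1 a x 0 y); rewrite addr0 ip0l addr0. Qed.
Lemma ipNl x y : ip (- x) y = - ip x y.
Proof. by rewrite -scaleN1r ipZl mulN1r. Qed.
Lemma ipBl x x' y : ip (x - x') y = ip x y - ip x' y.
Proof. by rewrite ipDl ipNl. Qed.
Lemma ipC x y : ip y x = Num.conj (ip x y).
Proof. exact: Hip.2.1. Qed.
Lemma ipDr x y y' : ip x (y + y') = ip x y + ip x y'.
Proof. by rewrite ipC ipDl rmorphD /= -!ipC. Qed.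
Lemma ipZr a x y : ip x (a *: y) = Num.conj a * ip x y.
Proof. by rewrite ipC ipZl rmorphM /= -ipC. Qed.
Lemma ip0r x : ip x 0 = 0.
Proof. by rewrite ipC ip0l rmorph0. Qed.
Lemma ipNr x y : ip x (- y) = - ip x y.
Proof. by rewrite ipC ipNl rmorphN /= -ipC. Qed.
Lemma ipBr x y y' : ip x (y - y') = ip x y - ip x y'.
Proof. by rewrite ipDr ipNr. Qed.
Lemma ip_ge0 x : 0 <= ip x x. Proof. exact: Hip.2.2.1. Qed.
Lemma ip_eq0 x : ip x x = 0 -> x = 0. Proof. exact: Hip.2.2.2. Qed.

Lemma N_ge0 x : 0 <= nrm2 ip x.
Proof. exact: ge0_Re (ip x x) (ip_ge0 x). Qed.
Lemma N_eq0 x : nrm2 ip x = 0 -> x = 0.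
Proof. move=> h; apply: ip_eq0. by rewrite (ge0_rc (ip x x) (ip_ge0 x)) -/(nrm2 ip x) h. Qed.

Definition P x y := Re (ip x y).
Lemma PC x y : P y x = P x y.
Proof. by rewrite /P ipC ReJ. Qed.
Lemma PDl x x' y : P (x + x') y = P x y + P x' y.
Proof. by rewrite /P ipDl ReD. Qed.
Lemma PDr x y y' : P x (y + y') = P x y + P x y'.
Proof. by rewrite /P ipDr ReD. Qed.
Lemma PNl x y : P (- x) y = - P x y.
Proof. by rewrite /P ipNl ReN. Qed.
Lemma PNr x y : P x (- y) = - P x y.
Proof. by rewrite /P ipNr ReN. Qed.
Lemma PZl r x y : P (rc r *: x) y = r * P x y.
Proof. by rewrite /P ipZl Re_rcM. Qed.
Lemma PZr r x y : P x (rc r *: y) = r * P x y.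
Proof. by rewrite /P ipZr conj_rc Re_rcM. Qed.
Lemma NP x : nrm2 ip x = P x x. Proof. by []. Qed.
Lemma ND x y : nrm2 ip (x + y) = nrm2 ip x + nrm2 ip y + 2 * P x y.
Proof. rewrite !NP PDl !PDr (PC x y). by rewrite mulr2n mulrDl mul1r; lra. Qed.
Lemma NN x : nrm2 ip (- x) = nrm2 ip x.
Proof. by rewrite !NP PNl PNr opprK. Qed.
Lemma NB x y : nrm2 ip (x - y) = nrm2 ip x + nrm2 ip y - 2 * P x y.
Proof. by rewrite ND NN PNr; lra. Qed.
Lemma NZ r x : nrm2 ip (rc r *: x) = r * r * nrm2 ip x.
Proof. by rewrite !NP PZl PZr mulrA. Qed.

Lemma ip_ext a b : (forall h, ip h a = ip h b) -> a = b.
Proof.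
move=> hab; apply/eqP; rewrite -subr_eq0; apply/eqP; apply: ip_eq0.
by rewrite ipBr hab subrr.
Qed.
Lemma ip_zero a : (forall h, ip h a = 0) -> a = 0.
Proof. move=> h; apply: ip_eq0; exact: h. Qed.

Lemma le_eps (x : R) : (forall e, 0 < e -> x < e) -> x <= 0.
Proof. move=> h; case: (ltrP 0 x) => // hx. have := h _ hx. by rewrite ltxx. Qed.

Lemma perp_dense_zero (S : V -> Prop) w :
  (forall e : R, 0 < e -> exists v, S v /\ nrm2 ip (w - v) < e) ->
  (forall v, S v -> ip w v = 0) -> w = 0.
Proof.
move=> hd ho; apply: N_eq0; apply/eqP; rewrite eq_le N_ge0 andbT.
apply: le_eps => e he. have [v [Sv hv]] := hd e he.
have hP : P w v = 0 by rewrite /P ho.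
move: hv; rewrite NB hP mulr0 subr0. have := N_ge0 v. lra.
Qed.
End IP.
Arguments rc {R}. Arguments Re_iM {R}. Arguments ReIm0 {R}.
Arguments P {R V} ip x y.
Section Proj.
Variable R : realType.
Local Notation C := (R[i]).
Variable V : lmodType C.
Variable ip : V -> V -> C.
Hypothesis Hip : inner_prod ip.
Hypothesis Hc : complete ip.
Local Notation N := (nrm2 ip).

Definition iv (n : nat) : R := (n.+1%:R)^-1.
Lemma iv_gt0 n : 0 < iv n. Proof. by rewrite /iv invr_gt0 ltr0Sn. Qed.
Lemma small_inv (e : R) : 0 < e -> exists N0, forall n, (N0 <= n)%N -> iv n < e.
Proof.
move=> he; exists (Num.Def.archi_bound e^-1) => n hn; rewrite /iv.
have he' : 0 < e^-1 by rewrite invr_gt0.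
have h := archi_boundP (ltW he').
rewrite invf_plt ?posrE ?ltr0Sn //.
apply: (lt_le_trans h); rewrite ler_nat; exact: (leq_trans hn).
Qed.

Lemma rcD (r s : R) : rc (r + s) = rc r + rc s.
Proof. by rewrite /rc; change (((r + s) +i* 0)%C = ((r + s) +i* (0 + 0))%C); rewrite addr0. Qed.

Lemma proj_dense (M : V -> Prop) (M0 : M 0)
  (MD : forall x y, M x -> M y -> M (x + y))
  (MZ : forall a x, M x -> M (a *: x))
  (Hperp : forall v, (forall m, M m -> ip v m = 0) -> v = 0) k e :
  0 < e -> exists m, M m /\ N (k - m) < e.
Proof.
move=> he.
pose E : classical_sets.set R := fun r => exists m, M m /\ r = N (k - m).
have hlb : classical_sets.has_lbound E.
  by exists 0 => y [m [_ ->]]; exact: N_ge0.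
have hne : classical_sets.nonempty E by exists (N (k - 0)); exists 0.
pose d := inf E.
have hd : forall m, M m -> d <= N (k - m).
  by move=> m Mm; apply: (ge_inf hlb); exists m.
have hseq : forall n : nat, exists m, M m /\ N (k - m) < d + iv n.
  move=> n; have hpos := iv_gt0 n.
  have [r [m [Mm ->]] hr] := inf_adherent hpos (conj hne hlb).
  by exists m.
pose mm n := proj1_sig (constructive_indefinite_description _ (hseq n)).
have hmm n : M (mm n) /\ N (k - mm n) < d + iv n.
  exact: (proj2_sig (constructive_indefinite_description _ (hseq n))).
have hcau : forall n p, N (mm n - mm p) < 2 * iv n + 2 * iv p.
  move=> n p; have [Mn hn] := hmm n; have [Mp hp] := hmm p.
  pose m' := rc (2^-1) *: (mm n + mm p).
  have Mm' : M m' by apply: MZ; apply: MD.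
  have h' : d <= N (k - m') := hd _ Mm'.
  have eq1 : rc 2 *: (k - m') = (k - mm n) + (k - mm p).
    rewrite scalerBr /m' scalerA rcM mulfV ?pnatr_eq0 // rc1 scale1r.
    rewrite mulr2n rcD rc1 scalerDl scale1r opprD.
    by rewrite addrACA.
  have eq2 : mm n - mm p = (k - mm p) - (k - mm n).
    by rewrite opprB [RHS]addrC [RHS]addrA subrK.
  have e1 : N (k - mm n) + N (k - mm p) + 2 * P ip (k - mm n) (k - mm p) = 2 * 2 * N (k - m').
    by have := NZ Hip 2 (k - m'); rewrite eq1 ND.
  have -> : N (mm n - mm p) = N (k - mm n) + N (k - mm p) - 2 * P ip (k - mm n) (k - mm p).
    by rewrite eq2 NB // (PC Hip (k - mm n)) (addrC (N (k - mm p))).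
  lra.
have hcs : forall e : R, 0 < e -> exists N0, forall m n, (N0 <= m)%N -> (N0 <= n)%N ->
        N (mm m - mm n) < e.
  move=> e0 he0.
  have he4 : 0 < e0 / 4 by apply: divr_gt0.
  have [N0 hN0] := small_inv _ he4.
  exists N0 => m n hm hn.
  apply: (lt_le_trans (hcau m n)).
  have := hN0 _ hm; have := hN0 _ hn; lra.
have [l hl] := Hc _ hcs.
pose v := k - l.
have hle : forall m, M m -> P ip v m <= 0.
  move=> m Mm.
  pose a := P ip v m; pose b := N m.
  have hb : 0 <= b by exact: N_ge0.
  have key : forall eps, 0 < eps -> a <= eps * b.
    move=> eps heps.
    have c1 : forall n, 2 * eps * P ip (k - mm n) m <= iv n + eps * eps * b.
      move=> n; have [Mn hn] := hmm n.
      have := hd _ (MD _ _ Mn (MZ (rc eps) _ Mm)).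
      rewrite opprD addrA NB // NZ // PZr //.
      rewrite -/b; lra.
    have c2 : forall x, - (2 * eps * P ip x m) <= N x + eps * eps * b.
      move=> x; have := N_ge0 Hip (x + rc eps *: m).
      rewrite ND // NZ // PZr // -/b; lra.
    have c3 : forall n, 2 * eps * a <= iv n + 2 * eps * eps * b + N (mm n - l).
      move=> n.
      have ek : k - mm n = v + (l - mm n) by rewrite /v addrA subrK.
      have := c1 n; rewrite ek PDl //.
      have := c2 (l - mm n); rewrite -(NN Hip (l - mm n)) opprB -/a.
      lra.
    have c4 : 2 * eps * a <= 2 * eps * eps * b.
      rewrite -subr_le0; apply: le_eps => del hdel.
      have hd2 : 0 < del / 2 by apply: divr_gt0.
      have [N1 hN1] := small_inv _ hd2.
      have [N2 hN2] := hl _ hd2.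
      have := c3 (maxn N1 N2).
      have := hN1 (maxn N1 N2) (leq_maxl _ _).
      have := hN2 (maxn N1 N2) (leq_maxr _ _).
      lra.
    have h2e : 0 < 2 * eps by apply: mulr_gt0.
    by rewrite -(ler_pM2l h2e) mulrA.
  case: (ltrP 0 a) => // ha.
  case: (ltrP 0 b) => hb0.
    pose eps := a / (2 * b).
    have heps : 0 < eps by apply: divr_gt0 => //; apply: mulr_gt0.
    have e2 : eps * b * 2 = a.
      rewrite /eps; field. by rewrite gt_eqF.
    have := key _ heps; lra.
  have := key 1 ltr01; lra.
have hz : forall m, M m -> ip v m = 0.
  move=> m Mm; apply: ReIm0.
    apply/eqP; rewrite eq_le hle //=.
    have := hle _ (MZ (-1) _ Mm); rewrite scaleN1r PNr //; lra.
  rewrite -Re_iM -ipZr //.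
  apply/eqP; rewrite eq_le (hle _ (MZ 'i%C _ Mm)) /=.
  have := hle _ (MZ (-1) _ (MZ 'i%C _ Mm)); rewrite scaleN1r PNr //; lra.
have hkl : k = l by apply: subr0_eq; exact: (Hperp v hz).
have [N0 hN0] := hl _ he.
exists (mm N0); split; first exact: (hmm N0).1.
by rewrite -NN // opprB hkl; apply: hN0.
Qed.
End Proj.
Section Sum.
Variable R : realType.
Local Notation C := (R[i]).
Variables V1 V2 : lmodType C.
Variables (ip1 : V1 -> V1 -> C) (ip2 : V2 -> V2 -> C).
Hypotheses (H1 : inner_prod ip1) (H2 : inner_prod ip2).

Lemma nrm2_sum (x : V1 * V2) : nrm2 (ipsum ip1 ip2) x = nrm2 ip1 x.1 + nrm2 ip2 x.2.
Proof. by rewrite /nrm2 /ipsum ReD. Qed.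

Lemma ipsum_inner : inner_prod (ipsum ip1 ip2).
Proof.
split; [|split; [|split]].
- move=> a x x' y; rewrite /ipsum /=.
  rewrite (ipDl H1) (ipDl H2) (ipZl H1) (ipZl H2). by rewrite mulrDr addrACA.
- by move=> x y; rewrite /ipsum rmorphD /= -(ipC H1) -(ipC H2).
- by move=> x; rewrite /ipsum addr_ge0 // ip_ge0.
- move=> [x1 x2]; rewrite /ipsum /= => /eqP.
  rewrite paddr_eq0 ?ip_ge0 // => /andP[/eqP h1 /eqP h2].
  by rewrite (ip_eq0 H1 _ h1) (ip_eq0 H2 _ h2).
Qed.

Lemma ipsum_complete : complete ip1 -> complete ip2 -> complete (ipsum ip1 ip2).
Proof.
move=> c1 c2 u hu.
have hu1 : forall e : R, 0 < e -> exists N, forall m n, (N <= m)%N -> (N <= n)%N ->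
    nrm2 ip1 ((u m).1 - (u n).1) < e.
  move=> e he; have [N hN] := hu e he; exists N => m n hm hn.
  have := hN m n hm hn; rewrite nrm2_sum /=.
  have := N_ge0 H2 ((u m).2 - (u n).2). lra.
have hu2 : forall e : R, 0 < e -> exists N, forall m n, (N <= m)%N -> (N <= n)%N ->
    nrm2 ip2 ((u m).2 - (u n).2) < e.
  move=> e he; have [N hN] := hu e he; exists N => m n hm hn.
  have := hN m n hm hn; rewrite nrm2_sum /=.
  have := N_ge0 H1 ((u m).1 - (u n).1). lra.
have [l1 hl1] := c1 _ hu1.
have [l2 hl2] := c2 _ hu2.
exists (l1, l2) => e he.
have he2 : 0 < e / 2 by apply: divr_gt0.
have [N1 hN1] := hl1 _ he2; have [N2 hN2] := hl2 _ he2.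
exists (maxn N1 N2) => n hn.
rewrite nrm2_sum /=.
have := hN1 n (leq_trans (leq_maxl _ _) hn).
have := hN2 n (leq_trans (leq_maxr _ _) hn).
lra.
Qed.

Lemma rho_sum (A1 : relation V1) (A2 : relation V2) z :
  rho ip1 A1 z -> rho ip2 A2 z -> rho (ipsum ip1 ip2) (rsum A1 A2) z.
Proof.
move=> [T1 [[lT1 [M1 hM1]] hT1]] [T2 [[lT2 [M2 hM2]] hT2]].
exists (fun k => (T1 k.1, T2 k.2)); split.
  split.
    by move=> a x y /=; rewrite lT1 lT2.
  exists (`|M1| + `|M2|) => x; rewrite !nrm2_sum /=.
  have := hM1 x.1; have := hM2 x.2.
  have := N_ge0 H1 x.1; have := N_ge0 H2 x.2.
  have := ler_norm M1; have := ler_norm M2.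
  have := normr_ge0 M1; have := normr_ge0 M2.
  nra.
move=> k f; split.
  move=> [g [[hA1 hA2] ->]].
  have e1 : f.1 = T1 (g - z *: f).1 by apply/(hT1 _ _).1; exists g.1.
  have e2 : f.2 = T2 (g - z *: f).2 by apply/(hT2 _ _).1; exists g.2.
  by case: f e1 e2 {hA1 hA2} => f1 f2 /= <- <-.
move=> ->.
have [g1 [hg1 e1]] := (hT1 k.1 (T1 k.1)).2 erefl.
have [g2 [hg2 e2]] := (hT2 k.2 (T2 k.2)).2 erefl.
exists (g1, g2); split; first by split.
by apply: injective_projections => /=.
Qed.

Lemma rho_res (V : lmodType C) (ip : V -> V -> C) (A : relation V) z k :
  rho ip A z -> inv_shift A z k (res A z k) /\
    (forall f, inv_shift A z k f -> f = res A z k).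
Proof.
move=> [T [_ hT]].
have hs : inv_shift A z k (res A z k).
  by apply: epsilon_spec; exists (T k); apply/(hT _ _).2.
split=> // f hf.
by rewrite (proj1 (hT _ _) hf) (proj1 (hT _ _) hs).
Qed.

Lemma res_sum (A1 : relation V1) (A2 : relation V2) z (k : V1 * V2) :
  rho (ipsum ip1 ip2) (rsum A1 A2) z ->
  res (rsum A1 A2) z k = (res A1 z k.1, res A2 z k.2).
Proof.
move=> hr; have [[g [[hA1 hA2] ek]] hu] := rho_res k hr.
set r := res (rsum A1 A2) z k in hA1 hA2 ek hu *.
have s1 : inv_shift A1 z k.1 (res A1 z k.1).
  by apply: epsilon_spec; exists r.1; exists g.1; rewrite ek.
have s2 : inv_shift A2 z k.2 (res A2 z k.2).
  by apply: epsilon_spec; exists r.2; exists g.2; rewrite ek.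
have [g1 [h1 e1]] := s1; have [g2 [h2 e2]] := s2.
have q1 : (res A1 z k.1, r.2) = r.
  apply: hu; exists (g1, g.2); split; first by split.
  apply: injective_projections => //=; exact: (f_equal snd ek).
have q2 : (r.1, res A2 z k.2) = r.
  apply: hu; exists (g.1, g2); split; first by split.
  apply: injective_projections => //=; exact: (f_equal fst ek).
have t1 : r.1 = res A1 z k.1 by rewrite -q1.
have t2 : r.2 = res A2 z k.2 by rewrite -q2.
by apply: injective_projections.
Qed.
End Sum.
Lemma lin0 (R : realType) (V W : lmodType R[i]) (T : V -> W) : linearF T -> T 0 = 0.
Proof.
move=> l; have := l 1 0 0; rewrite scale1r addr0 => h.
have := congr1 (fun x => x - T 0) h; rewrite /= subrr addrK scale1r. by move=> <-.
Qed.
Lemma linD (R : realType) (V W : lmodType R[i]) (T : V -> W) x y :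
  linearF T -> T (x + y) = T x + T y.
Proof. by move=> l; have := l 1 x y; rewrite !scale1r. Qed.
Lemma linZ (R : realType) (V W : lmodType R[i]) (T : V -> W) a x :
  linearF T -> T (a *: x) = a *: T x.
Proof. by move=> l; have := l a x 0; rewrite !addr0 (lin0 l) addr0. Qed.

Unset Implicit Arguments.

Theorem lemma4 (R : realType) (H K1 K2 : lmodType R[i])
  (ipH : H -> H -> R[i])
  (ip1 : K1 -> K1 -> R[i]) (J1 : K1 -> K1)
  (ip2 : K2 -> K2 -> R[i]) (J2 : K2 -> K2) :
  hilbert ipH -> pontryagin ip1 J1 -> pontryagin ip2 J2 ->
  (* main part and (i) *)
  (forall (A1 : relation K1) (A2 : relation K2) (z0 : R[i])
     (G1 : H -> K1) (G2 : H -> K2) (G1p : K1 -> H) (G2p : K2 -> H)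
     (Q1 Q2 : R[i] -> H -> H) (Q1s Q2s : H -> H),
     selfadj_rel (kform ip1 J1) A1 -> selfadj_rel (kform ip2 J2) A2 ->
     rho ip1 A1 z0 -> rho ip2 A2 z0 -> 0 < complex.Im z0 ->
     bounded ipH ip1 G1 -> bounded ipH ip2 G2 ->
     is_kadj ipH (kform ip1 J1) G1 G1p -> is_kadj ipH (kform ip2 J2) G2 G2p ->
     is_hadj ipH (Q1 z0) Q1s -> is_hadj ipH (Q2 z0) Q2s ->
     (forall z, rho ip1 A1 z -> forall h,
        Q1 z h = Q1s h + (z - Num.conj z0) *: G1p (G1 h + (z - z0) *: res A1 z (G1 h))) ->
     (forall z, rho ip2 A2 z -> forall h,
        Q2 z h = Q2s h + (z - Num.conj z0) *: G2p (G2 h + (z - z0) *: res A2 z (G2 h))) ->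
     let A := rsum A1 A2 in
     let G := fun h : H => (G1 h, G2 h) in
     let ipK := ipsum ip1 ip2 in
     let kfK := kform ipK (Jsum J1 J2) in
     (forall Gp : K1 * K2 -> H, is_kadj ipH kfK G Gp ->
        (forall z, rho ip1 A1 z -> rho ip2 A2 z -> forall h,
           Q1 z h + Q2 z h = Q1s h + Q2s h +
             (z - Num.conj z0) *: Gp (G h + (z - z0) *: res A z (G h))) /\
        (injective Gp ->
           forall k : K1 * K2, nclosure ipK
             (fspan (fun v => exists z h, rho ipK A z /\
                       v = G h + (z - z0) *: res A z (G h))) k))) /\
  (* (ii) *)
  (forall (A1 : K1 -> K1) (A2 : K2 -> K2)
     (G01 : H -> K1) (G02 : H -> K2) (G01p : K1 -> H) (G02p : K2 -> H),
     bounded ip1 ip1 A1 -> bounded ip2 ip2 A2 ->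
     (forall x y, kform ip1 J1 (A1 x) y = kform ip1 J1 x (A1 y)) ->
     (forall x y, kform ip2 J2 (A2 x) y = kform ip2 J2 x (A2 y)) ->
     bounded ipH ip1 G01 -> bounded ipH ip2 G02 ->
     is_kadj ipH (kform ip1 J1) G01 G01p -> is_kadj ipH (kform ip2 J2) G02 G02p ->
     let A := rsum (graph A1) (graph A2) in
     let G0 := fun h : H => (G01 h, G02 h) in
     let ipK := ipsum ip1 ip2 in
     let Q := fun (z : R[i]) (h : H) =>
        G01p (res (graph A1) z (G01 h)) + G02p (res (graph A2) z (G02 h)) in
     (forall k : K1 * K2, nclosure ipK
        (fspan (fun v => exists z h, rho ipK A z /\ v = res A z (G0 h))) k) ->
     (injective G01 \/ injective G02) ->
     forall f : H, (forall z h, rho ipK A z -> ipH f (Q z h) = 0) -> f = 0).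
Proof.
move=> [IH _] [[I1 C1] [lJ1 [JJ1 [sJ1 _]]]] [[I2 C2] [lJ2 [JJ2 [sJ2 _]]]].
have IK : inner_prod (ipsum ip1 ip2) := ipsum_inner I1 I2.
split.
- move=> A1 A2 z0 G1 G2 G1p G2p Q1 Q2 Q1s Q2s sA1 sA2 r1 r2 hIm bG1 bG2 aG1 aG2
    hq1 hq2 eQ1 eQ2 A G ipK kfK Gp aGp.
  have hGp : forall k, Gp k = G1p k.1 + G2p k.2.
    move=> k; apply: (ip_ext IH) => h.
    by rewrite (ipDr IH) aGp aG1 aG2.
  split.
  + move=> z rz1 rz2 h.
    have rz : rho ipK A z := rho_sum I1 I2 rz1 rz2.
    rewrite eQ1 // eQ2 // hGp /A (res_sum _ rz) /=.
    by rewrite scalerDr addrACA.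
  + move=> inj k e he.
    have CK : complete ipK := ipsum_complete I1 I2 C1 C2.
    have Gp0 : Gp 0 = 0.
      apply: (ip_zero IH) => h; rewrite aGp /kfK /kform.
      exact: (ip0r IK).
    pose M := fun v => exists h, v = G h.
    have M0 : M 0 by exists 0; rewrite /G (lin0 bG1.1) (lin0 bG2.1).
    have MD : forall x y, M x -> M y -> M (x + y).
      move=> x y [hx ->] [hy ->]; exists (hx + hy).
      by rewrite /G (linD _ _ bG1.1) (linD _ _ bG2.1).
    have MZ : forall a x, M x -> M (a *: x).
      move=> a x [hx ->]; exists (a *: hx).
      by rewrite /G (linZ _ _ bG1.1) (linZ _ _ bG2.1).
    have Hperp : forall v, (forall m, M m -> ipK v m = 0) -> v = 0.
    move=> v hv.
    have hJ : Gp (Jsum J1 J2 v) = 0.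
      apply: (ip_zero IH) => h; rewrite aGp /kfK /kform /ipK /ipsum /Jsum /=.
      rewrite sJ1 JJ1 sJ2 JJ2.
      have := hv (G h) (ex_intro _ h erefl); rewrite /ipK /ipsum /= => e0.
      by rewrite (ipC I1) (ipC I2) -rmorphD e0 rmorph0.
    have hJ0 : Jsum J1 J2 v = 0 by apply: inj; rewrite hJ Gp0.
    have := f_equal (Jsum J1 J2) hJ0; rewrite /Jsum /= JJ1 JJ2 (lin0 lJ1) (lin0 lJ2).
    by case: v {hv hJ hJ0} => v1 v2 /= ->.
    have [m [[h ->] hm]] := proj_dense IK CK M M0 MD MZ Hperp k e he.
    exists (G h); split=> //.
    exists 1%N, (fun _ => 1), (fun _ => G h + (z0 - z0) *: res A z0 (G h)); split.
      move=> i; exists z0, h; split; last by []. exact: (rho_sum I1 I2 r1 r2).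
    by rewrite big_ord1 scale1r subrr scale0r addr0.
- move=> A1 A2 G01 G02 G01p G02p bA1 bA2 sA1 sA2 bG1 bG2 aG1 aG2 A G0 ipK Q
    hden hinj f hf.
  pose w := Jsum J1 J2 (G0 f).
  have hw : w = 0.
    apply: (perp_dense_zero IK (fspan (fun v => exists z h, rho ipK A z /\ v = res A z (G0 h)))) => [e he|v [n [c [s [hs ->]]]]].
      exact: hden w e he.
    apply: (big_ind (fun x => ipK w x = 0)).
    + exact: (ip0r IK).
    + by move=> x y; rewrite /ipK (ipDr IK) => -> ->; rewrite addr0.
    + move=> i _; rewrite /ipK (ipZr IK).
      have [z [h [rz ->]]] := hs i.
      rewrite /A (res_sum _ rz) /ipsum /w /Jsum /=.
      have := hf z h rz; rewrite /Q (ipDr IH) aG1 aG2 /kform => ->.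
      by rewrite mulr0.
  have h1 : G01 f = 0.
    have := f_equal (fun x => J1 x.1) hw; rewrite /w /Jsum /= JJ1 => ->.
    exact: lin0 lJ1.
  have h2 : G02 f = 0.
    have := f_equal (fun x => J2 x.2) hw; rewrite /w /Jsum /= JJ2 => ->.
    exact: lin0 lJ2.
  case: hinj => inj; apply: inj.
    by rewrite h1 (lin0 bG1.1).
  by rewrite h2 (lin0 bG2.1).
Qed.
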